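(* Let $u_t=F$ be an autonomous evolution PDE for a scalar $u(x,t)$, with $F=c_1 u + c_2 u^2 + c_3 u^3 + c_4 u_x + c_5 u_{xx} + c_6 u_{xxx} + c_7 u_{xxxx} + c_8\, u u_x + c_9\, u u_{xx} + c_{10}\, u^2 u_x$ for real constants $c_j$, where $1,u,u^2,u_x,u_{xx},u\cdot u_x$ are linearly independent on the jet space $J^{(2)}$. If the PDE is Galilean-invariant, i.e. admits the Lie point symmetry generator $t\partial_x+\partial_u$, then its true support $S^*=\{\text{terms with } c_j\neq 0\}$ is contained in the implementation-reduced library $\mathcal{L}_G=\{u_x,u_{xx},u_{xxx},u_{xxxx},u\cdot u_x,u\cdot u_{xx},u^2\cdot u_x\}$ (the ten-term library with $u,u^2,u^3$ removed).
   Context: A PDE $u_t=F$ admits the generator $\mathbf v=t\partial_x+\partial_u$ if the prolonged vector field $\mathrm{pr}\,\mathbf v$ annihilates $u_t-F$ whenever $u_t=F$; equivalently the Galilean boost $(x,t,u)\mapsto(x+ct,t,u+c)$ maps solutions to solutions for every $c\in\mathbb R$. Subscripts denote partial derivatives. *)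

(* Defs.v *)
From HB Require Import structures.
From mathcomp Require Import all_boot all_order all_algebra.
From mathcomp Require Import mpoly.
Set Implicit Arguments. Unset Strict Implicit. Unset Printing Implicit Defensive.
Import Order.TTheory GRing.Theory Num.Theory.
Local Open Scope ring_scope.

(* Jet space.  Coordinates: x, t, and u_{i,j} = d^i_x d^j_t u for i,j < jK. *)
(* jK = 8 is far more than needed: all equations considered have order    *)
(* <= 4 in x and <= 1 in t, and the prolongation formula needs jet        *)
(* coordinates of order <= 6.                                             *)
Definition jK : nat := 8.
Definition jN : nat := (jK * jK + 1).+1.

Notation jetfun R := {mpoly R[jN]}.

Definition xvar : 'I_jN := inord 0.
Definition tvar : 'I_jN := inord 1.
Definition uvar (i j : nat) : 'I_jN := inord (2 + i * jK + j).

Definition Xc {R : comNzRingType} : jetfun R := 'X_xvar.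
Definition Tc {R : comNzRingType} : jetfun R := 'X_tvar.
(* u_{i,j}; beyond the truncation it is 0 (never reached in practice) *)
Definition Uc {R : comNzRingType} (i j : nat) : jetfun R :=
  if (i < jK)%N && (j < jK)%N then 'X_(uvar i j) else 0.

Section Prolongation.
Variable R : comNzRingType.

Definition Dx (p : jetfun R) : jetfun R :=
  p^`M(xvar) + \sum_(i < jK) \sum_(j < jK) Uc i.+1 j * p^`M(uvar i j).
Definition Dt (p : jetfun R) : jetfun R :=
  p^`M(tvar) + \sum_(i < jK) \sum_(j < jK) Uc i j.+1 * p^`M(uvar i j).

(* a point-symmetry generator  v = xi d_x + tau d_t + phi d_u,
   xi tau phi functions of (x,t,u) (given as polynomials) *)
Record generator := Generator { gxi : jetfun R; gtau : jetfun R; gphi : jetfun R }.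

Definition characteristic (v : generator) : jetfun R :=
  gphi v - gxi v * Uc 1 0 - gtau v * Uc 0 1.

Definition prolcoef (v : generator) (i j : nat) : jetfun R :=
  iter i Dx (iter j Dt (characteristic v)) + gxi v * Uc i.+1 j + gtau v * Uc i j.+1.

Definition prolong (v : generator) (P : jetfun R) : jetfun R :=
  gxi v * P^`M(xvar) + gtau v * P^`M(tvar)
  + \sum_(i < jK) \sum_(j < jK) prolcoef v i j * P^`M(uvar i j).

Definition admits_generator (F : jetfun R) (v : generator) : Prop :=
  forall a : 'I_jN -> R,
    (Uc 0 1 - F).@[a] = 0 -> (prolong v (Uc 0 1 - F)).@[a] = 0.

Definition galilean : generator := Generator Tc 0 1.

End Prolongation.

(* The ten-term library; index j : 'I_10 corresponds to c_{j+1}:          *)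
(*  0:u 1:u^2 2:u^3 3:u_x 4:u_xx 5:u_xxx 6:u_xxxx 7:u u_x 8:u u_xx 9:u^2 u_x *)
Definition libterm {R : comNzRingType} (k : 'I_10) : jetfun R :=
  nth 0 [:: Uc 0 0; Uc 0 0 ^+ 2; Uc 0 0 ^+ 3; Uc 1 0; Uc 2 0; Uc 3 0; Uc 4 0;
            Uc 0 0 * Uc 1 0; Uc 0 0 * Uc 2 0; Uc 0 0 ^+ 2 * Uc 1 0] k.

Definition rhs {R : comNzRingType} (c : 'I_10 -> R) : jetfun R :=
  \sum_(k < 10) c k *: libterm k.

Definition true_support {R : comNzRingType} (c : 'I_10 -> R) : {set 'I_10} :=
  [set k | c k != 0].

Definition lib_LG : {set 'I_10} := [set k : 'I_10 | (3 <= k)%N].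

(* Main.v *)
Require Import Defs.
From HB Require Import structures.
From mathcomp Require Import all_boot all_order all_algebra.
From mathcomp Require Import mpoly.
From mathcomp Require Import ring zify.
Import Order.TTheory GRing.Theory Num.Theory.
Local Open Scope ring_scope.

Section S.
Variable R : realFieldType.
Notation JF := {mpoly R[jN]}.

Lemma dX (i j : 'I_jN) : ('X_i : JF)^`M(j) = (i == j)%:R.
Proof.
rewrite mderivX mnm1E; case: eqP => [->|_].
  have -> : (U_(j) - U_(j) = 0)%MM by apply/mnmP=> k; rewrite !mnmE subnn.
  by rewrite mpolyX0 scale1r.
by rewrite scale0r.
Qed.

Lemma val_uvar i j : (i < 8)%N -> (j < 8)%N -> (uvar i j : nat) = (2 + i * 8 + j)%N.
Proof. move=> hi hj; rewrite /uvar inordK //; rewrite /jN /jK; lia. Qed.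
Lemma val_tvar : (tvar : nat) = 1%N. Proof. by rewrite /tvar inordK. Qed.
Lemma val_xvar : (xvar : nat) = 0%N. Proof. by rewrite /xvar inordK. Qed.

Definition Dg (k : 'I_jN) (w : nat -> nat -> JF) (p : JF) : JF :=
  p^`M(k) + \sum_(i < jK) \sum_(j < jK) w i j * p^`M(uvar i j).

Lemma DxE p : Dx p = Dg xvar (fun i j => Uc i.+1 j) p. Proof. by []. Qed.
Lemma DtE p : Dt p = Dg tvar (fun i j => Uc i j.+1) p. Proof. by []. Qed.

Lemma DgD k w p q : Dg k w (p + q) = Dg k w p + Dg k w q.
Proof.
rewrite /Dg mderivD -!addrA; congr (_ + _); rewrite addrCA; congr (_ + _).
rewrite -big_split; apply: eq_bigr=> i _; rewrite -big_split; apply: eq_bigr=> j _.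
by rewrite mderivD mulrDr.
Qed.
Lemma DgN k w p : Dg k w (- p) = - Dg k w p.
Proof.
rewrite /Dg mderivN opprD; congr (_ + _); rewrite -sumrN; apply: eq_bigr=> i _.
rewrite -sumrN; apply: eq_bigr=> j _; by rewrite mderivN mulrN.
Qed.
Lemma DgB k w p q : Dg k w (p - q) = Dg k w p - Dg k w q.
Proof. by rewrite DgD DgN. Qed.
Lemma DgM k w p q : Dg k w (p * q) = Dg k w p * q + p * Dg k w q.
Proof.
rewrite /Dg mderivM.
have -> : \sum_(i < jK) \sum_(j < jK) w i j * (p * q)^`M(uvar i j) =
   (\sum_(i < jK) \sum_(j < jK) w i j * p^`M(uvar i j)) * q
   + p * (\sum_(i < jK) \sum_(j < jK) w i j * q^`M(uvar i j)).
  rewrite mulr_suml mulr_sumr -big_split; apply: eq_bigr=> i _.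
  rewrite mulr_suml mulr_sumr -big_split; apply: eq_bigr=> j _.
  rewrite mderivM mulrDr; congr (_ + _); [exact: mulrA | exact: mulrCA].
ring.
Qed.
Lemma Dg1 k w : Dg k w 1 = 0.
Proof.
rewrite /Dg -mpolyC1 mderivC add0r big1 // => i _; rewrite big1 // => j _.
by rewrite mderivC mulr0.
Qed.
Lemma Dg0 k w : Dg k w 0 = 0.
Proof. by have := DgB k w 1 1; rewrite subrr Dg1 subrr. Qed.

Lemma neq_ord (a b : 'I_jN) : (a : nat) <> b -> (a == b) = false.
Proof. by move=> h; apply/eqP => e; apply: h; rewrite e. Qed.

Lemma uvar_eq k l i j : (k < 8)%N -> (l < 8)%N -> (i < 8)%N -> (j < 8)%N ->
  (uvar k l == uvar i j) = ((k == i) && (l == j)).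
Proof.
move=> hk hl hi hj; apply/eqP/andP.
  move/(congr1 (@nat_of_ord _)); rewrite !val_uvar // => h.
  split; apply/eqP; lia.
by case=> /eqP -> /eqP ->.
Qed.

Lemma dUc k l i j : (k < 8)%N -> (l < 8)%N -> (i < 8)%N -> (j < 8)%N ->
  (Uc k l : JF)^`M(uvar i j) = ((k == i) && (l == j))%:R.
Proof. by move=> hk hl hi hj; rewrite /Uc /jK hk hl /= dX uvar_eq. Qed.

Lemma dTc_u i j : (i < 8)%N -> (j < 8)%N -> (Tc : JF)^`M(uvar i j) = 0.
Proof. move=> hi hj; rewrite /Tc dX neq_ord // val_tvar val_uvar //; lia. Qed.
Lemma dTc_x : (Tc : JF)^`M(xvar) = 0.
Proof. by rewrite /Tc dX neq_ord // val_tvar val_xvar. Qed.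

Lemma DxTc : Dx (Tc : JF) = 0.
Proof.
rewrite DxE /Dg dTc_x add0r big1 // => i _; rewrite big1 // => j _.
by rewrite dTc_u // mulr0.
Qed.

Lemma DxTcM r : Dx ((Tc : JF) * r) = Tc * Dx r.
Proof. by rewrite !DxE DgM -DxE DxTc mul0r add0r. Qed.

Definition Q : JF := characteristic (galilean R).

Lemma iterDxQ i : exists r, iter i.+1 (@Dx R) Q = Tc * r.
Proof.
elim: i => [|i [r IH]].
  exists (- Dx (Uc 1 0)).
  rewrite /= /Q /characteristic /= !DxE. have -> : (0 : JF) * Uc 0 1 = 0 by rewrite mul0r. rewrite !DgB Dg1 DgM Dg0 -!DxE DxTc.
  by rewrite mul0r add0r subr0 add0r mulrN.
exists (Dx r); by rewrite iterS IH DxTcM.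
Qed.

End S.

Definition av (R : realFieldType) (s v : R) : 'I_jN -> R :=
  fun m => if (m : nat) == 1%N then 0 else if (m : nat) == 2%N then s
           else if (m : nat) == 3%N then v else 0.

Lemma evUc (R : realFieldType) (a : 'I_jN -> R) k l : (k < 8)%N -> (l < 8)%N ->
  (Uc k l : {mpoly R[jN]}).@[a] = a (uvar k l).
Proof. by move=> hk hl; rewrite /Uc /jK hk hl /= mevalXU. Qed.

Lemma evTc (R : realFieldType) (a : 'I_jN -> R) :
  (Tc : {mpoly R[jN]}).@[a] = a tvar.
Proof. by rewrite /Tc mevalXU. Qed.

Lemma prolE (R : realFieldType) (a : 'I_jN -> R) (P : {mpoly R[jN]}) : a tvar = 0 ->
  (prolong (galilean R) P).@[a] =
  \sum_(i < jK) \sum_(j < jK) (prolcoef (galilean R) i j).@[a] * (P^`M(uvar i j)).@[a].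
Proof.
move=> ha.
have -> : prolong (galilean R) P = Tc * P^`M(xvar) + 0 * P^`M(tvar)
  + \sum_(i < jK) \sum_(j < jK) prolcoef (galilean R) i j * P^`M(uvar i j) by [].
rewrite !mevalD !mevalM evTc ha meval0 !mul0r !add0r raddf_sum.
apply: eq_bigr => i _; rewrite raddf_sum; apply: eq_bigr => j _; exact: mevalM.
Qed.

Lemma P00 (R : realFieldType) (a : 'I_jN -> R) : a tvar = 0 ->
  (prolcoef (galilean R) 0 0).@[a] = 1.
Proof.
move=> ha; rewrite /prolcoef /= /characteristic /=.
by rewrite !(mevalD, mevalB, mevalN, mevalM) meval1 evTc ha !meval0 !mul0r !oppr0 !addr0.
Qed.

Lemma P01 (R : realFieldType) (a : 'I_jN -> R) : a tvar = 0 -> a (uvar 1 0) = 0 ->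
  (prolcoef (galilean R) 0 1).@[a] = 0.
Proof.
move=> ha hu; rewrite /prolcoef /= /characteristic /=.
have -> : (0 : {mpoly R[jN]}) * Uc 0 1 = 0 by rewrite mul0r.
rewrite DtE !DgB Dg1 DgM Dg0 -!DtE.
rewrite !(mevalD, mevalB, mevalN, mevalM) evTc ha !meval0 evUc // hu !mul0r !mulr0 !oppr0 !addr0; exact: subrr.
Qed.

Lemma Pi0 (R : realFieldType) (a : 'I_jN -> R) i : a tvar = 0 ->
  (prolcoef (galilean R) i.+1 0).@[a] = 0.
Proof.
move=> ha; rewrite /prolcoef /=.
have -> : characteristic (galilean R) = Q R by [].
have [r E] := iterDxQ R i. rewrite -iterS E.
by rewrite !(mevalD, mevalM) evTc ha meval0 !mul0r !addr0.
Qed.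

Lemma dP (R : realFieldType) (c : 'I_10 -> R) i j : (i < 8)%N -> (j.+1 < 8)%N ->
  (Uc 0 1 - rhs c : {mpoly R[jN]})^`M(uvar i j.+1) = ((i == 0) && (j == 0))%:R.
Proof.
move=> hi hj.
rewrite /rhs !big_ord_recl big_ord0 /libterm /=.
rewrite !exprS expr0 !mulr1.
rewrite !(mderivB, mderivD, mderivZ, mderivM, mderiv0) !dUc //.
have -> : (0%N == j.+1) = false by [].
rewrite !(andbF, mul0r, mulr0, scaler0, addr0, add0r) subr0 eqSS [0%N == i]eq_sym [0%N == j]eq_sym.
by [].
Qed.

Lemma key (R : realFieldType) (c : 'I_10 -> R) :
  admits_generator (rhs c) (galilean R) -> forall s : R,
  c ord0 + 2 * c (lift ord0 ord0) * s + 3 * c (lift ord0 (lift ord0 ord0)) * s ^+ 2 = 0.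
Proof.
move=> H s.
set c0 := c ord0; set c1 := c (lift ord0 ord0); set c2 := c (lift ord0 (lift ord0 ord0)).
pose a := @av R s (c0 * s + c1 * s ^+ 2 + c2 * s ^+ 3).
have Hc : (Uc 0 1 - rhs c).@[a] = 0.
  rewrite /rhs !big_ord_recl big_ord0 /libterm /=.
  rewrite !(mevalB, mevalD, mevalZ, mevalM, meval0, rmorphXn) !evUc //.
  rewrite /a /av !val_uvar //= !mulr0 !addr0. have : forall x y : R, x * y = y * x by move=> x y; ring. move=> _. rewrite -/c0 -/c1 -/c2. ring.
have Hp := H a Hc.
move: Hp; rewrite prolE; last by rewrite /a /av val_tvar.
have ha : a tvar = 0 by rewrite /a /av val_tvar.
have hu : a (uvar 1 0) = 0 by rewrite /a /av val_uvar.
rewrite big_ord_recl.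
rewrite [X in _ + X]big1 ?addr0; last first.
  move=> i _; rewrite big_ord_recl lift0 Pi0 // mul0r add0r big1 // => j _.
  by rewrite lift0 (@dP R c i.+1 j (ltn_ord i) (ltn_ord j)) rmorph_nat mulr0.
rewrite big_ord_recl big_ord_recl big1 ?addr0; last first.
  by move=> j _; rewrite !lift0 (@dP R c 0 j.+1 isT (ltn_ord j)) rmorph_nat mulr0.
rewrite P00 // lift0 P01 // mul0r addr0 mul1r.
rewrite /rhs !big_ord_recl big_ord0 /libterm /=.
rewrite !exprS expr0 !mulr1.
rewrite !(mderivB, mderivD, mderivZ, mderivM, mderiv0) !dUc //=.
rewrite !(mevalB, mevalD, mevalN, mevalZ, mevalM, meval0, meval1, rmorph_nat) !evUc //.
rewrite /a /av !val_uvar //= -/c0 -/c1 -/c2.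
move=> h; rewrite -[RHS]oppr0 -h; ring.
Qed.

Theorem mainTheorem4 (R : realFieldType) (c : 'I_10 -> R) :
  admits_generator (rhs c) (galilean R) ->
  true_support c \subset lib_LG.
Proof.
move=> H; have K := @key R c H.
have e0 : c ord0 = 0 by have := K 0; rewrite expr0n /= !mulr0 !addr0.
have e1 := K 1; have e2 := K (-1).
rewrite e0 add0r in e1; rewrite e0 add0r in e2.
have e3 : c (lift ord0 (lift ord0 ord0)) = 0.
  have : 6 * c (lift ord0 (lift ord0 ord0)) = 0.
    by rewrite -[RHS](addr0 0) -{1}e1 -e2; ring.
  by move/eqP; rewrite mulf_eq0 (eqr_nat R 6 0) /= => /eqP.
have e4 : c (lift ord0 ord0) = 0.
  have : 2 * c (lift ord0 ord0) = 0 by rewrite -e1 e3; ring.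
  by move/eqP; rewrite mulf_eq0 (eqr_nat R 2 0) /= => /eqP.
apply/subsetP => k; rewrite !inE; apply: contraR; rewrite -ltnNge => hk.
apply/eqP.
case: k hk => [[|[|[|k]]] hk] _ //.
- by rewrite -e0; congr (c _); exact: val_inj.
- by rewrite -e4; congr (c _); exact: val_inj.
- by rewrite -e3; congr (c _); exact: val_inj.
Qed.
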